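(* Let $R$ be a commutative semiring and $v:R\to M$ a surjective m-valuation with support $\mathfrak q$. Let $U(v):=\widehat{U^0(v)}$ and $\varphi_v:=\sigma_{U^0(v)}\circ\varphi_v^0:R\to U(v)$. Then $\varphi_v$ is a supervaluation covering $v$ and is an initial cover of $v$: for any supervaluation $\psi:R\to V$ covering $v$, there exists a unique semiring homomorphism $\alpha:U(v)\to V$ over $M$ with $\psi=\alpha\circ\varphi_v$.
   Context: A bipotent semiring $M$: commutative monoid with absorbing $0$, total order compatible with multiplication, $0$ least, $x+y=\max(x,y)$. m-valuation: multiplicative $v:R\to M$ with $v(0)=0$, $v(1)=1$, $v(a+b)\le\max(v(a),v(b))$. A supertropical monoid is a commutative monoid $U$ with absorbing $0$, idempotent $e$ with $ex=0\Rightarrow x=0$, and a total order on $eU$ making it a bipotent semiring; it is a (supertropical) semiring if the addition $x+y:=y$ ($ex<ey$), $x$ ($ex>ey$), $ex$ ($ex=ey$) is associative and distributive. An m-supervaluation is $\varphi:R\to U$ with $\varphi(0)=0$, $\varphi(1)=1$, multiplicative, $e\varphi(a+b)\le\max(e\varphi(a),e\varphi(b))$; a supervaluation is an m-supervaluation whose target is a supertropical semiring; it covers $v$ if $eU=M$ and $e\varphi=v$. ''Over $M$'' means restricting to the identity on $M$. $U^0(v)$: the set $(R\setminus\mathfrak q)\sqcup M$ with product $xy$ if $x,y,xy\in R\setminus\mathfrak q$; $0_M$ if $x,y\in R\setminus\mathfrak q$, $xy\in\mathfrak q$; $v(x)y$ if $x\in R\setminus\mathfrak q$, $y\in M$ (and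 symmetrically); the $M$-product on $M$; $e=1_M$, order of $M$ on $eU^0(v)=M$. $\varphi_v^0(a)=a$ for $a\notin\mathfrak q$, $0_M$ for $a\in\mathfrak q$. For a supertropical monoid $U$ with $M=eU$: $D(U):=M\cup\{yz:y,z\in U,\exists y'\in M,\ y'<ey,\ y'z=eyz\}$; $\hat U:=U/E$ where $x\sim_E y$ iff $x=y$ or ($x,y\in D(U)$ and $ex=ey$), with the induced supertropical monoid structure (multiplication and $e$ induced, ghost ideal identified with $M$); $\sigma_U:U\to\hat U$ the projection. *)

(* Defs.v *)
From HB Require Import structures.
From mathcomp Require Import all_boot all_order all_algebra.
From Stdlib Require Import ClassicalEpsilon.
Set Implicit Arguments. Unset Strict Implicit. Unset Printing Implicit Defensive.
Import GRing.Theory.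
Local Open Scope ring_scope.

(* Bipotent semirings.  M is a commutative (semi)ring-like type: its        *)
(* multiplicative commutative monoid with absorbing 0 is the monoid of the  *)

Definition bmax (M : Type) (le : rel M) (x y : M) : M := if le x y then y else x.
Definition blt (M : Type) (le : rel M) (x y : M) : bool := le x y && ~~ le y x.

Definition is_bipotent (M : comPzSemiRingType) (le : rel M) : Prop :=
  [/\ [/\ reflexive le, antisymmetric le, transitive le & total le],
      (forall x : M, le 0 x),
      (forall x y z : M, le x y -> le (x * z) (y * z)) &
      (forall x y : M, x + y = bmax le x y)].

Definition is_mvaluation (R M : comPzSemiRingType) (le : rel M) (v : R -> M) : Prop :=
  [/\ v 0 = 0, v 1 = 1, (forall a b, v (a * b) = v a * v b) &
      (forall a b, le (v (a + b)) (bmax le (v a) (v b)))].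

(* Supertropical monoids U whose ghost ideal eU is identified with M.      *)
(*   ghost : M -> U is the identification of M with eU (an isomorphism of  *)
(*           monoids with absorbing zero onto eU; the order on eU is the   *)
(*           one transported from M),                                      *)
(*   gv    : U -> M gives, for x : U, the element ex of eU = M.            *)
Record stm_ops (M U : Type) := STMOps {
  smul : U -> U -> U;
  sone : U;
  szero : U;
  se : U;
  sghost : M -> U;
  sgv : U -> M }.

Definition is_stmonoid (M : comPzSemiRingType) (le : rel M) (U : Type)
    (S : stm_ops M U) : Prop :=
  [/\ is_bipotent le,
      [/\ associative (smul S), commutative (smul S),
          left_id (sone S) (smul S) /\ left_zero (szero S) (smul S),
          smul S (se S) (se S) = se S &
          (forall x, smul S (se S) x = szero S -> x = szero S)] &
      [/\ injective (sghost S), sghost S 1 = se S, sghost S 0 = szero S,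
          (forall m n, sghost S (m * n) = smul S (sghost S m) (sghost S n)) &
          (forall x, sghost S (sgv S x) = smul S (se S) x)]].

Definition sadd (M : Type) (le : rel M) (U : Type) (S : stm_ops M U) (x y : U) : U :=
  if blt le (sgv S x) (sgv S y) then y
  else if blt le (sgv S y) (sgv S x) then x
  else smul S (se S) x.

Definition is_stsemiring (M : comPzSemiRingType) (le : rel M) (U : Type)
    (S : stm_ops M U) : Prop :=
  [/\ is_stmonoid le S, associative (sadd le S) &
      (forall x y z, smul S x (sadd le S y z) =
                     sadd le S (smul S x y) (smul S x z))].

Definition is_msupervaluation (R M : comPzSemiRingType) (le : rel M) (U : Type)
    (S : stm_ops M U) (phi : R -> U) : Prop :=
  [/\ is_stmonoid le S, phi 0 = szero S, phi 1 = sone S,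
      (forall a b, phi (a * b) = smul S (phi a) (phi b)) &
      (forall a b, le (sgv S (phi (a + b)))
                      (bmax le (sgv S (phi a)) (sgv S (phi b))))].

Definition is_supervaluation (R M : comPzSemiRingType) (le : rel M) (U : Type)
    (S : stm_ops M U) (phi : R -> U) : Prop :=
  is_stsemiring le S /\ is_msupervaluation le S phi.

Definition covers (R M : Type) (U : Type) (S : stm_ops M U) (phi : R -> U)
    (v : R -> M) : Prop :=
  forall a, smul S (se S) (phi a) = sghost S (v a).

Definition is_st_hom (M : Type) (le : rel M) (U V : Type) (S : stm_ops M U)
    (T : stm_ops M V) (f : U -> V) : Prop :=
  [/\ f (szero S) = szero T, f (sone S) = sone T,
      (forall x y, f (smul S x y) = smul T (f x) (f y)) &
      (forall x y, f (sadd le S x y) = sadd le T (f x) (f y))].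

Definition over_M (M U V : Type) (S : stm_ops M U) (T : stm_ops M V)
    (f : U -> V) : Prop :=
  forall m, f (sghost S m) = sghost T m.

(* The quotient is realized as the type of E-equivalence classes; the      *)
(* induced operations are computed on (arbitrarily chosen) representatives.*)
Section Hat.
Variables (M : Type) (le : rel M) (U : Type) (S : stm_ops M U).

Definition Dset (x : U) : Prop :=
  (exists m, x = sghost S m) \/
  (exists y z y', x = smul S y z /\ blt le y' (sgv S y) /\
                  smul S (sghost S y') z = smul S (smul S (se S) y) z).

Definition Erel (x y : U) : Prop :=
  x = y \/ (Dset x /\ Dset y /\ smul S (se S) x = smul S (se S) y).

Definition hatU : Type := {C : U -> Prop | exists x, C = Erel x}.

Definition sigmaU (x : U) : hatU := exist _ (Erel x) (ex_intro _ x erefl).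

Definition hrepr (C : hatU) : U :=
  proj1_sig (constructive_indefinite_description _ (proj2_sig C)).

Definition hat_ops : stm_ops M hatU :=
  STMOps (fun C D => sigmaU (smul S (hrepr C) (hrepr D)))
         (sigmaU (sone S)) (sigmaU (szero S)) (sigmaU (se S))
         (fun m => sigmaU (sghost S m)) (fun C => sgv S (hrepr C)).
End Hat.

Section U0.
Variables (R M : comPzSemiRingType) (v : R -> M).

Definition Rq : Type := {a : R | v a != 0}.
Definition U0 : Type := (Rq + M)%type.

Definition toU0 (a : R) : U0 :=
  match @idP (v a != 0) with
  | ReflectT h => inl (exist _ a h)
  | ReflectF _ => inr 0
  end.

Definition u0mul (x y : U0) : U0 :=
  match x, y with
  | inl a, inl b => toU0 (sval a * sval b)
  | inl a, inr m => inr (v (sval a) * m)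
  | inr m, inl b => inr (m * v (sval b))
  | inr m, inr n => inr (m * n)
  end.

Definition u0gv (x : U0) : M :=
  match x with inl a => v (sval a) | inr m => m end.

(* the unit of U^0(v) is 1_R (or 1_M if 1_R lies in q, i.e. M = 0) *)
Definition U0_ops : stm_ops M U0 :=
  STMOps u0mul (if toU0 1 is inl a then inl a else inr 1) (inr 0) (inr 1)
         (fun m => inr m) u0gv.

Definition phi0 (a : R) : U0 := toU0 a.
End U0.

Definition Uv (R M : comPzSemiRingType) (le : rel M) (v : R -> M) : Type :=
  hatU le (U0_ops v).
Definition Uv_ops (R M : comPzSemiRingType) (le : rel M) (v : R -> M)
  : stm_ops M (Uv le v) := hat_ops le (U0_ops v).
Definition phiv (R M : comPzSemiRingType) (le : rel M) (v : R -> M)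
  (a : R) : Uv le v := sigmaU le (U0_ops v) (phi0 v a).

(* Main.v *)
Require Import Defs.
From mathcomp Require Import all_boot all_order all_algebra.
From Stdlib Require Import ClassicalEpsilon FunctionalExtensionality PropExtensionality ProofIrrelevance.
Set Implicit Arguments. Unset Strict Implicit. Unset Printing Implicit Defensive.
Import GRing.Theory.
Local Open Scope ring_scope.


Section Bip.
Variables (M : comPzSemiRingType) (le : rel M).
Hypothesis Hb : is_bipotent le.

Lemma le_refl' x : le x x.
Proof. by case: Hb => [[r _ _ _] _ _ _]. Qed.
Lemma le_anti' x y : le x y -> le y x -> x = y.
Proof. case: Hb => [[_ a _ _] _ _ _] h1 h2; apply: a; by rewrite h1 h2. Qed.
Lemma le_trans' x y z : le x y -> le y z -> le x z.
Proof. case: Hb => [[_ _ t _] _ _ _]; exact: t. Qed.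
Lemma le_total' x y : le x y || le y x.
Proof. case: Hb => [[_ _ _ t] _ _ _]; exact: t. Qed.
Lemma le_mulr' x y z : le x y -> le (x * z) (y * z).
Proof. case: Hb => [_ _ m _]; exact: m. Qed.
Lemma le_mull' x y z : le x y -> le (z * x) (z * y).
Proof. rewrite ![z * _]mulrC; exact: le_mulr'. Qed.
Lemma blt_irr x : blt le x x = false.
Proof. by rewrite /blt le_refl'. Qed.
Lemma bltE x y : blt le x y = ~~ le y x.
Proof. rewrite /blt; case h: (le y x); first by rewrite andbF.
by have := le_total' x y; rewrite h orbF => ->. Qed.
End Bip.

Section Gen.
Variables (M : comPzSemiRingType) (le : rel M) (U : Type) (S : stm_ops M U).
Hypothesis HS : is_stmonoid le S.
Local Notation mul := (smul S).
Local Notation e := (se S).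
Local Notation gh := (sghost S).
Local Notation gv := (sgv S).

Lemma Hbip : is_bipotent le. Proof. by case: HS. Qed.
Lemma mulA : associative mul. Proof. by case: HS => _ [a _ _ _ _] _. Qed.
Lemma mulC : commutative mul. Proof. by case: HS => _ [_ c _ _ _] _. Qed.
Lemma mul1 : left_id (sone S) mul. Proof. by case: HS => _ [_ _ [h _] _ _] _. Qed.
Lemma mul0 : left_zero (szero S) mul. Proof. by case: HS => _ [_ _ [_ h] _ _] _. Qed.
Lemma mulee : mul e e = e. Proof. by case: HS => _ [_ _ _ h _] _. Qed.
Lemma e0 x : mul e x = szero S -> x = szero S. Proof. by case: HS => _ [_ _ _ _ h] _; apply: h. Qed.
Lemma gh_inj : injective gh. Proof. by case: HS => _ _ [h _ _ _ _]. Qed.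
Lemma gh1 : gh 1 = e. Proof. by case: HS => _ _ [_ h _ _ _]. Qed.
Lemma gh0 : gh 0 = szero S. Proof. by case: HS => _ _ [_ _ h _ _]. Qed.
Lemma ghM m n : gh (m * n) = mul (gh m) (gh n). Proof. by case: HS => _ _ [_ _ _ h _]. Qed.
Lemma ghgv x : gh (gv x) = mul e x. Proof. by case: HS => _ _ [_ _ _ _ h]. Qed.

Lemma mulCA x y z : mul x (mul y z) = mul y (mul x z).
Proof. by rewrite mulA (mulC x) -mulA. Qed.
Lemma e_gh m : mul e (gh m) = gh m.
Proof. by rewrite -gh1 -ghM mul1r. Qed.
Lemma gv_gh m : gv (gh m) = m.
Proof. by apply: gh_inj; rewrite ghgv e_gh. Qed.
Lemma e_e x : mul e (mul e x) = mul e x.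
Proof. by rewrite mulA mulee. Qed.
Lemma gv_e x : gv (mul e x) = gv x.
Proof. by apply: gh_inj; rewrite !ghgv e_e. Qed.
Lemma gv_mul x y : gv (mul x y) = gv x * gv y.
Proof.
apply: gh_inj; rewrite ghM !ghgv -{1}mulee -!mulA; congr mul.
by rewrite mulCA.
Qed.
Lemma mul0r' x : mul x (szero S) = szero S.
Proof. by rewrite mulC mul0. Qed.

Lemma sadd_comm x y : sadd le S x y = sadd le S y x.
Proof.
have Hb := Hbip.
rewrite /sadd !(bltE Hb).
case h1: (le (gv y) (gv x)); case h2: (le (gv x) (gv y)) => //=.
- rewrite -!ghgv; congr gh; by apply: (le_anti' Hb).
- by have := le_total' Hb (gv x) (gv y); rewrite h1 h2.
Qed.

Lemma sadd_assoc : associative (sadd le S).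
Proof.
move=> x y z.
have Hb := Hbip.
have tr := le_trans' Hb; have an := le_anti' Hb.
rewrite /sadd !(bltE Hb).
case hxy: (le (gv x) (gv y)); case hyx: (le (gv y) (gv x));
case hyz: (le (gv y) (gv z)); case hzy: (le (gv z) (gv y));
case hxz: (le (gv x) (gv z)); case hzx: (le (gv z) (gv x)) => /=;
rewrite ?gv_e ?hxy ?hyx ?hyz ?hzy ?hxz ?hzx /= ?e_e //;
try (by have := le_total' Hb (gv x) (gv y); rewrite hxy hyx);
try (by have := le_total' Hb (gv z) (gv y); rewrite hzy hyz);
try (by have := le_total' Hb (gv x) (gv z); rewrite hxz hzx);
try (by rewrite (tr _ _ _ hxy hyz) in hxz);
try (by rewrite (tr _ _ _ hyx hxz) in hyz);
try (by rewrite (tr _ _ _ hzy hyx) in hzx);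
try (by rewrite (tr _ _ _ hyz hzx) in hyx);
try (by rewrite (tr _ _ _ hxz hzy) in hxy);
try (by rewrite (tr _ _ _ hzx hxy) in hzy);
idtac.
all: rewrite -?ghgv; congr gh; apply: an; assumption.
Qed.

Lemma sadd_gv x y : le (gv x) (gv y) -> le (gv y) (gv x) -> sadd le S x y = mul e x.
Proof. by move=> h1 h2; rewrite /sadd !(bltE Hbip) h1 h2. Qed.

Lemma Erel_refl x : Erel le S x x. Proof. by left. Qed.
Lemma Erel_sym x y : Erel le S x y -> Erel le S y x.
Proof. by case=> [->|[a [b c]]]; [left|right]. Qed.
Lemma Erel_trans x y z : Erel le S x y -> Erel le S y z -> Erel le S x z.
Proof.
case=> [->//|[dx [dy exy]]]; case=> [<-|[_ [dz eyz]]]; first by right.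
by right; rewrite exy.
Qed.
Lemma Erel_e x y : Erel le S x y -> mul e x = mul e y.
Proof. by case=> [->|[_ [_ h]]]. Qed.
Lemma Erel_gv x y : Erel le S x y -> gv x = gv y.
Proof. by move/Erel_e=> h; apply: gh_inj; rewrite !ghgv. Qed.

Lemma D_mul x y : Dset le S x -> Dset le S (mul x y).
Proof.
case=> [[m ->]|[a [b [y' [-> [h1 h2]]]]]].
  left; exists (gv (mul (gh m) y)); by rewrite ghgv mulA e_gh.
right; exists a, (mul b y), y'; split; first by rewrite mulA.
by split=> //; rewrite !mulA h2.
Qed.
Lemma Erel_mull x x' y : Erel le S x x' -> Erel le S (mul x y) (mul x' y).
Proof.
case=> [->|[d1 [d2 h]]]; first by left.
by right; split; [|split]; rewrite ?mulA ?h //; apply: D_mul.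
Qed.
Lemma Erel_mul x x' y y' : Erel le S x x' -> Erel le S y y' ->
  Erel le S (mul x y) (mul x' y').
Proof.
move=> h1 h2; apply: Erel_trans (Erel_mull y h1) _.
rewrite (mulC x') (mulC x'); exact: Erel_mull.
Qed.

Local Notation hU := (hatU le S).
Local Notation sig := (sigmaU le S).
Local Notation H := (hat_ops le S).

Lemma hat_ext (C D : hU) : proj1_sig C = proj1_sig D -> C = D.
Proof.
case: C => C pC; case: D => D pD /= h; subst D; congr exist; exact: proof_irrelevance.
Qed.
Lemma sig_eq x y : Erel le S x y -> sig x = sig y.
Proof.
move=> h; apply: hat_ext => /=; apply: functional_extensionality => z.
apply: propositional_extensionality; split => h'.
  by apply: Erel_trans (Erel_sym h) h'.
by apply: Erel_trans h h'.
Qed.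
Lemma sig_Erel x y : sig x = sig y -> Erel le S x y.
Proof.
move=> h; have : proj1_sig (sig x) y = proj1_sig (sig y) y by rewrite h.
by move=> /= ->; left.
Qed.
Lemma hrepr_spec (C : hU) : proj1_sig C = Erel le S (hrepr C).
Proof. rewrite /hrepr; case: (constructive_indefinite_description _ _) => //. Qed.
Lemma sig_hrepr (C : hU) : sig (hrepr C) = C.
Proof. by apply: hat_ext => /=; rewrite hrepr_spec. Qed.
Lemma hrepr_sig x : Erel le S (hrepr (sig x)) x.
Proof. by apply: sig_Erel; rewrite sig_hrepr. Qed.
Lemma sig_surj (C : hU) : exists x, C = sig x.
Proof. by exists (hrepr C); rewrite sig_hrepr. Qed.

Lemma hmul x y : smul H (sig x) (sig y) = sig (mul x y).
Proof. by apply: sig_eq; apply: Erel_mul; apply: hrepr_sig. Qed.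
Lemma hgv x : sgv H (sig x) = gv x.
Proof. exact: Erel_gv (hrepr_sig x). Qed.
Lemma hse : se H = sig e. Proof. by []. Qed.
Lemma hone : sone H = sig (sone S). Proof. by []. Qed.
Lemma hzero : szero H = sig (szero S). Proof. by []. Qed.
Lemma hgh m : sghost H m = sig (gh m). Proof. by []. Qed.
Lemma hsadd x y : sadd le H (sig x) (sig y) = sig (sadd le S x y).
Proof.
rewrite /sadd !hgv; case: ifP => // _; case: ifP => // _.
by rewrite -[se H]/(sig e) hmul.
Qed.

Lemma hat_stmonoid : is_stmonoid le H.
Proof.
split; first exact: Hbip.
- split.
  + move=> A B C; case: (sig_surj A) (sig_surj B) (sig_surj C) => [x ->] [y ->] [z ->].
    by rewrite !hmul mulA.
  + move=> A B; case: (sig_surj A) (sig_surj B) => [x ->] [y ->]; by rewrite !hmul mulC.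
  + split=> A; case: (sig_surj A) => [x ->]; by rewrite ?hone ?hzero hmul ?mul1 ?mul0.
  + by rewrite hse hmul mulee.
  + move=> A; case: (sig_surj A) => [x ->]; rewrite hse hzero hmul => /sig_Erel /Erel_e.
    rewrite e_e mul0r' => /e0 ->; done.
- split.
  + move=> m n; rewrite !hgh => /sig_Erel /Erel_e; rewrite !e_gh; exact: gh_inj.
  + by rewrite hgh hse gh1.
  + by rewrite hgh hzero gh0.
  + by move=> m n; rewrite !hgh hmul ghM.
  + move=> A; case: (sig_surj A) => [x ->]; by rewrite hgh hgv hse hmul ghgv.
Qed.

Lemma hat_stsemiring : is_stsemiring le H.
Proof.
have Hb := Hbip.
split; first exact: hat_stmonoid.
- move=> A B C; case: (sig_surj A) (sig_surj B) (sig_surj C) => [x ->] [y ->] [z ->].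
  by rewrite !hsadd sadd_assoc.
- move=> A B C; case: (sig_surj A) (sig_surj B) (sig_surj C) => [x ->] [y ->] [z ->].
  rewrite hsadd !hmul hsadd.
  suff main : forall y z, blt le (gv y) (gv z) ->
      Erel le S (mul x (sadd le S y z)) (sadd le S (mul x y) (mul x z)).
    case: (boolP (blt le (gv y) (gv z))) => h1.
      exact: sig_eq (main _ _ h1).
    case: (boolP (blt le (gv z) (gv y))) => h2.
      by rewrite sadd_comm (sadd_comm (mul x y)); exact: sig_eq (main _ _ h2).
    move: h1 h2; rewrite !(bltE Hb) !negbK => h1 h2.
    rewrite sadd_gv // sadd_gv ?gv_mul ?le_mull' //.
    by rewrite mulCA.
  move=> {}y {}z h; rewrite /sadd h.
  have hle : le (gv (mul x y)) (gv (mul x z)).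
    by rewrite !gv_mul; apply: le_mull' => //; move: h; rewrite /blt => /andP[].
  rewrite !(bltE Hb) hle /=.
  case: ifP => [_|/negbFE h2]; first by left.
  have eq : gv (mul x y) = gv (mul x z) by apply: (le_anti' Hb).
  right; split; [|split].
  + right; exists z, x, (gv y); split; first by rewrite mulC.
    split => //; rewrite ghgv -!mulA -!ghgv; congr gh.
    by rewrite mulC eq mulC.
  + left; exists (gv (mul x y)); by rewrite ghgv.
  + by rewrite e_e -!ghgv eq.
Qed.
End Gen.


Section U0sec.
Variables (R M : comPzSemiRingType) (le : rel M) (v : R -> M).
Hypothesis Hb : is_bipotent le.
Hypothesis Hv : is_mvaluation le v.
Local Notation S := (U0_ops v).

Lemma v0 : v 0 = 0. Proof. by case: Hv. Qed.
Lemma v1 : v 1 = 1. Proof. by case: Hv. Qed.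
Lemma vM a b : v (a * b) = v a * v b. Proof. by case: Hv. Qed.

Lemma toU0_inl a (h : v a != 0) : toU0 v a = inl (exist _ a h).
Proof.
rewrite /toU0; destruct (@idP (v a != 0)) as [h'|h']; last by rewrite h in h'.
by congr inl; congr exist; apply: eq_irrelevance.
Qed.
Lemma toU0_0 a : v a = 0 -> toU0 v a = inr 0.
Proof. move=> h; rewrite /toU0; destruct (@idP (v a != 0)) as [h'|h'] => //.
by exfalso; move: h'; rewrite h eqxx. Qed.
Lemma inl_toU0 (a : Rq v) : inl a = toU0 v (sval a).
Proof. by case: a => a h; rewrite toU0_inl. Qed.
Lemma U0_cases (x : U0 v) : (exists a, x = toU0 v a) \/ (exists m, x = inr m).
Proof. case: x => [a|m]; [left; exists (sval a); exact: inl_toU0|right; by exists m]. Qed.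

Lemma gv_toU0 a : sgv S (toU0 v a) = v a.
Proof.
case: (eqVneq (v a) 0) => h; first by rewrite toU0_0.
by rewrite (toU0_inl h).
Qed.
Lemma mul_tm a m : smul S (toU0 v a) (inr m) = inr (v a * m).
Proof.
case: (eqVneq (v a) 0) => ha; last by rewrite (toU0_inl ha).
by rewrite (toU0_0 ha) ha /=.
Qed.
Lemma mul_mt a m : smul S (inr m) (toU0 v a) = inr (m * v a).
Proof.
case: (eqVneq (v a) 0) => ha; last by rewrite (toU0_inl ha).
by rewrite (toU0_0 ha) ha /=.
Qed.
Lemma mul_tt a b : smul S (toU0 v a) (toU0 v b) = toU0 v (a * b).
Proof.
case: (eqVneq (v a) 0) => ha.
  by rewrite (toU0_0 ha) (toU0_0 (a := a * b)) ?vM ?ha ?mul0r // mul_mt mul0r.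
case: (eqVneq (v b) 0) => hb.
  by rewrite (toU0_0 hb) (toU0_0 (a := a * b)) ?vM ?hb ?mulr0 // mul_tm mulr0.
by rewrite (toU0_inl ha) (toU0_inl hb).
Qed.
Lemma mul_mm m n : smul S (inr m) (inr n) = inr (m * n).
Proof. by []. Qed.
Lemma one_U0 : sone S = toU0 v 1.
Proof.
rewrite /=; case: (eqVneq (v 1) 0) => h.
  by rewrite (toU0_0 h); move: h; rewrite v1 => ->.
by rewrite (toU0_inl h).
Qed.

Lemma zero_U0 : szero S = inr 0. Proof. by []. Qed.
Lemma e_U0 : se S = inr 1. Proof. by []. Qed.
Lemma gh_U0 m : sghost S m = inr m. Proof. by []. Qed.
Ltac u0simp := rewrite ?zero_U0 ?e_U0 ?gh_U0; repeat first [rewrite mul_tt|rewrite mul_tm|rewrite mul_mt|rewrite mul_mm|rewrite gv_toU0].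

Lemma U0_stmonoid : is_stmonoid le S.
Proof.
split => //.
- split.
  + move=> x y z; case: (U0_cases x) => [][a ->]; case: (U0_cases y) => [][b ->]; case: (U0_cases z) => [][c ->];
    u0simp; by rewrite ?vM ?mulrA.
  + move=> x y; case: (U0_cases x) => [][a ->]; case: (U0_cases y) => [][b ->]; u0simp;
    by rewrite mulrC.
  + split=> x; case: (U0_cases x) => [][a ->]; rewrite ?one_U0; u0simp;
    by rewrite ?v1 ?mul1r ?mul0r.
  + by rewrite /= mulr1.
  + move=> x; case: (U0_cases x) => [][a ->]; u0simp;
    rewrite mul1r => [[h]]; by [rewrite toU0_0| rewrite h].
- split.
  + by move=> m n [].
  + by [].
  + by [].
  + by [].
  + move=> x; case: (U0_cases x) => [][a ->]; u0simp;
    by rewrite mul1r.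
Qed.
End U0sec.


Section Univ.
Variables (R M : comPzSemiRingType) (le : rel M) (v : R -> M).
Hypothesis Hb : is_bipotent le.
Hypothesis Hv : is_mvaluation le v.
Variables (V : Type) (T : stm_ops M V) (psi : R -> V).
Hypothesis HT : is_stsemiring le T.
Hypothesis Hpsi : is_msupervaluation le T psi.
Hypothesis Hcov : covers T psi v.
Local Notation S := (U0_ops v).
Local Notation H := (hat_ops le S).

Lemma HTm : is_stmonoid le T. Proof. by case: HT. Qed.
Lemma HSm : is_stmonoid le S. Proof. exact: U0_stmonoid. Qed.

Definition beta (x : U0 v) : V :=
  match x with inl a => psi (sval a) | inr m => sghost T m end.

Lemma psiM a b : psi (a * b) = smul T (psi a) (psi b). Proof. by case: Hpsi. Qed.
Lemma psi1 : psi 1 = sone T. Proof. by case: Hpsi. Qed.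

Lemma beta_toU0 a : beta (toU0 v a) = psi a.
Proof.
case: (eqVneq (v a) 0) => h; last by rewrite (toU0_inl h).
rewrite (toU0_0 h) /= (gh0 HTm).
by symmetry; apply: (e0 HTm); rewrite Hcov h (gh0 HTm).
Qed.

Lemma beta_mul x y : beta (smul S x y) = smul T (beta x) (beta y).
Proof.
have HTm := HTm.
case: (U0_cases x) => [][a ->]; case: (U0_cases y) => [][b ->];
rewrite ?(mul_tt Hv) ?mul_tm ?mul_mt ?mul_mm ?beta_toU0 //=.
- by rewrite psiM.
- by rewrite (ghM HTm) -Hcov -(mulA HTm) (mulCA HTm) (e_gh HTm).
- by rewrite (ghM HTm) -Hcov (mulCA HTm) (mulA HTm) (e_gh HTm).
- by rewrite (ghM HTm).
Qed.

Lemma beta_e x : beta (smul S (se S) x) = smul T (se T) (beta x).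
Proof. by rewrite beta_mul /= (gh1 HTm). Qed.

Lemma gv_beta x : sgv T (beta x) = sgv S x.
Proof.
apply: (gh_inj HTm); rewrite (ghgv HTm).
by rewrite -beta_e -(ghgv HSm).
Qed.

Lemma beta_D x : Dset le S x -> beta x = smul T (se T) (beta x).
Proof.
have HTm := HTm.
case=> [[m ->]|[y [z [y' [-> [h1 h2]]]]]]; first by rewrite /= (e_gh HTm).
have hy : beta y = sadd le T (sghost T y') (beta y).
  by rewrite /sadd (gv_gh HTm) gv_beta h1.
case: HT => _ _ distr.
rewrite beta_mul (mulC HTm (beta y)) hy distr.
rewrite (mulC HTm _ (sghost T y')) -[sghost T y']/(beta (sghost S y')) -beta_mul h2.
rewrite -(mulA HSm) beta_e beta_mul (mulC HTm (beta z)).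
by rewrite (sadd_gv HTm) ?(gv_e HTm) ?(le_refl' Hb) ?(e_e HTm).
Qed.

Lemma beta_E x y : Erel le S x y -> beta x = beta y.
Proof.
case=> [->//|[dx [dy h]]].
by rewrite (beta_D dx) (beta_D dy) -!beta_e h.
Qed.

Definition alpha (C : hatU le S) : V := beta (hrepr C).

Lemma alpha_sig x : alpha (sigmaU le S x) = beta x.
Proof. apply: beta_E; apply: hrepr_sig; exact: HSm. Qed.

Lemma alpha_hom : is_st_hom le H T alpha.
Proof.
have HTm := HTm; have HSm := HSm.
split.
- by rewrite hzero alpha_sig /= (gh0 HTm).
- by rewrite hone alpha_sig (one_U0 Hv) beta_toU0 psi1.
- move=> A B; case: (sig_surj A) (sig_surj B) => [x ->] [y ->].
  by rewrite (hmul HSm) !alpha_sig beta_mul.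
- move=> A B; case: (sig_surj A) (sig_surj B) => [x ->] [y ->].
  rewrite (hsadd HSm) !alpha_sig /sadd !gv_beta.
  case: ifP => // _; case: ifP => // _; exact: beta_e.
Qed.

Lemma alpha_over : over_M H T alpha.
Proof. by move=> m; rewrite hgh alpha_sig. Qed.

Lemma alpha_psi a : psi a = alpha (phiv le v a).
Proof. by rewrite /phiv alpha_sig /phi0 beta_toU0. Qed.

Lemma alpha_unique (f : hatU le S -> V) :
  over_M H T f -> (forall a, psi a = f (phiv le v a)) -> alpha = f.
Proof.
move=> hO hP; apply: functional_extensionality => C.
case: (sig_surj C) => x ->; rewrite alpha_sig.
case: x => [a|m].
  by rewrite inl_toU0 beta_toU0 hP.
by rewrite -[sigmaU le S (inr m)]/(sghost H m) hO.
Qed.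
End Univ.


Theorem theorem6p9 (R M : comPzSemiRingType) (le : rel M) (v : R -> M) :
  is_bipotent le -> is_mvaluation le v -> (forall m : M, exists a : R, v a = m) ->
  [/\ is_supervaluation le (Uv_ops le v) (phiv le v),
      covers (Uv_ops le v) (phiv le v) v &
      forall (V : Type) (T : stm_ops M V) (psi : R -> V),
        is_supervaluation le T psi -> covers T psi v ->
        exists! alpha : Uv le v -> V,
          [/\ is_st_hom le (Uv_ops le v) T alpha,
              over_M (Uv_ops le v) T alpha &
              forall a, psi a = alpha (phiv le v a)]].
Proof.
move=> Hb Hv _.
have HS := U0_stmonoid Hb Hv.
split.
- split; first exact: hat_stsemiring HS.
  split.
  + exact: hat_stmonoid HS.
  + by rewrite /phiv /phi0 (toU0_0 (v0 Hv)).
  + by rewrite /phiv /phi0 hone (one_U0 Hv).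
  + by move=> a b; rewrite /phiv /phi0 (hmul HS) (mul_tt Hv).
  + move=> a b; rewrite /phiv /phi0 !(hgv HS) !gv_toU0; by case: Hv.
- move=> a; rewrite /phiv /phi0 hse (hmul HS) e_U0 mul_mt mul1r; by [].
- move=> V T psi [HT Hpsi] Hcov.
  exists (alpha T psi); split.
    split; [exact: alpha_hom | exact: alpha_over | exact: alpha_psi].
  by move=> f [_ hO hP]; apply: alpha_unique.
Qed.
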